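(* Assume the common support assumption, the overlap assumption, monotone treatment response and monotone treatment selection. Then under both Design 1 and Design 2, for all $x\in\mathcal X$, $1\le\theta(x)\le\Gamma(x,0)$, and these bounds are sharp (they are the best possible bounds on $\theta(x)$ given the distribution of $(Y,T,X)$ and the stated assumptions).
   Context: Population variables: $Y^*\in\{0,1\}$ (outcome), $T^*\in\{0,1\}$ (treatment), $X^*$ (covariate vector). Potential outcomes $Y^*(1),Y^*(0)\in\{0,1\}$ satisfy $Y^*=T^*Y^*(1)+(1-T^* )Y^*(0)$. The observed vector $(Y,T,X)$ arises from Bernoulli sampling: $Y\in\{0,1\}$ is drawn with known probability $h_0:=\Pr(Y=1)\in(0,1)$, and given $Y=y$, $(T,X)$ is drawn from a distribution $\mathcal P_y$. Densities (or mass functions) are denoted by $f$. Design 1 (case-control): for all $t\in\{0,1\}$, $x\in\mathcal X$, $y\in\{0,1\}$, $f_{X|Y}(x\mid y)=f_{X^*|Y^*}(x\mid y)$ and $\Pr(T=t\mid X=x,Y=y)=\Pr(T^*=t\mid X^*=x,Y^*=y)$. Design 2 (case-population): for all $t,x$, $f_{X|Y}(x\mid 0)=f_{X^*}(x)$, $\Pr(T=t\mid X=x,Y=0)=\Pr(T^*=t\mid X^*=x)$, $f_{X|Y}(x\mid 1)=f_{X^*|Y^*}(x\mid 1)$, $\Pr(T=t\mid X=x,Y=1)=\Pr(T^*=t\mid X^*=x,Y^*=1)$. Common support assumption: the support of $X^*$ and that of $X$ given $Y=y$ for $y=0,1$ coincide; call it $\mathcal X$. Let $\Pi(t\mid y,x):=\Pr(T=t\mid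 Y=y,X=x)$, assumed nonzero for all $t,y$. Then $\Gamma(x,0)=\frac{\Pi(1\mid 1,x)\,\Pi(0\mid 0,x)}{\Pi(0\mid 1,x)\,\Pi(1\mid 0,x)}$ (the odds ratio conditional on $X=x$). Causal relative risk: $\theta(x):=\Pr\{Y^*(1)=1\mid X^*=x\}/\Pr\{Y^*(0)=1\mid X^*=x\}$. Overlap: for all $(t,x)\in\{0,1\}\times\mathcal X$, $0<\Pr\{Y^*(t)=1\mid X^*=x\}<1$ and $0<\Pr(T^*=1\mid X^*=x)<1$. Monotone treatment response: $Y^*(1)\ge Y^*(0)$ almost surely. Monotone treatment selection: for all $t\in\{0,1\}$, $x\in\mathcal X$, $\Pr\{Y^*(t)=1\mid T^*=1,X^*=x\}\ge\Pr\{Y^*(t)=1\mid T^*=0,X^*=x\}$. *)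

(* Defs.v *)
From HB Require Import structures.
From mathcomp Require Import all_boot all_order all_algebra.
From mathcomp Require Import all_classical all_reals all_analysis.
Set Implicit Arguments. Unset Strict Implicit. Unset Printing Implicit Defensive.
Import Order.TTheory GRing.Theory Num.Theory.
Local Open Scope classical_set_scope.
Local Open Scope ring_scope.

Section Model.
Context {d : measure_display} {X : measurableType d} {R : realType}.

(* A population: X* has density [g] w.r.t. the base measure, and
   [q x y1 y0 t] = Pr(Y*(1)=y1, Y*(0)=y0, T*=t | X*=x). *)
Record Population := MkPopulation {
  pop_g : X -> R;
  pop_q : X -> bool -> bool -> bool -> R }.

(* Observed distribution of (T,X) given Y=y:
   [obs_f y x] = f_{X|Y}(x|y),  [obs_Pi t y x] = Pi(t|y,x) = Pr(T=t|Y=y,X=x). *)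
Record Observed := MkObserved {
  obs_f : bool -> X -> R;
  obs_Pi : bool -> bool -> X -> R }.

Definition IsPopulation (mu : {measure set X -> \bar R}) (P : Population) : Prop :=
  measurable_fun setT (pop_g P) /\
  (forall x, 0 <= pop_g P x) /\
  (\int[mu]_x (pop_g P x)%:E = 1)%E /\
  (forall x y1 y0 t, 0 <= pop_q P x y1 y0 t) /\
  (forall x, \sum_(y1 : bool) \sum_(y0 : bool) \sum_(t : bool) pop_q P x y1 y0 t = 1) /\
  (forall y1 y0 t, measurable_fun setT (fun x => pop_q P x y1 y0 t)).

Definition outcome (y1 y0 t : bool) : bool := if t then y1 else y0.

Definition pYT_X (P : Population) (x : X) (y t : bool) : R :=
  \sum_(y1 : bool) \sum_(y0 : bool) (if outcome y1 y0 t == y then pop_q P x y1 y0 t else 0).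

Definition pY_X (P : Population) (x : X) (y : bool) : R := \sum_(t : bool) pYT_X P x y t.

Definition pT_X (P : Population) (t : bool) (x : X) : R := \sum_(y : bool) pYT_X P x y t.

Definition pT_YX (P : Population) (t y : bool) (x : X) : R := pYT_X P x y t / pY_X P x y.

Definition pY (mu : {measure set X -> \bar R}) (P : Population) (y : bool) : R :=
  fine (\int[mu]_x (pop_g P x * pY_X P x y)%:E)%E.

Definition fX_Y (mu : {measure set X -> \bar R}) (P : Population) (y : bool) (x : X) : R :=
  pop_g P x * pY_X P x y / pY mu P y.

(* Pr(Y*(t)=1 | X*=x) *)
Definition pPO (P : Population) (t : bool) (x : X) : R :=
  \sum_(y1 : bool) \sum_(y0 : bool) \sum_(s : bool)
     (if (if t then y1 else y0) then pop_q P x y1 y0 s else 0).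

(* Pr(Y*(t)=1 | T*=s, X*=x) *)
Definition pPO_T (P : Population) (t s : bool) (x : X) : R :=
  (\sum_(y1 : bool) \sum_(y0 : bool)
     (if (if t then y1 else y0) then pop_q P x y1 y0 s else 0)) / pT_X P s x.

Definition theta (P : Population) (x : X) : R := pPO P true x / pPO P false x.

Definition Gamma (O : Observed) (x : X) : R :=
  obs_Pi O true true x * obs_Pi O false false x /
  (obs_Pi O false true x * obs_Pi O true false x).

Definition suppX (P : Population) : set X := [set x | 0 < pop_g P x].

Definition CommonSupport (P : Population) (O : Observed) : Prop :=
  suppX P = [set x | 0 < obs_f O false x] /\ suppX P = [set x | 0 < obs_f O true x].

Definition Overlap (P : Population) : Prop :=
  forall x, suppX P x ->
    (forall t, 0 < pPO P t x < 1) /\ 0 < pT_X P true x < 1.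

(* Monotone treatment response: Pr(Y*(1) < Y*(0) | X*=x) = 0 on the support *)
Definition MTR (P : Population) : Prop :=
  forall x, suppX P x -> pop_q P x false true true + pop_q P x false true false = 0.

Definition MTS (P : Population) : Prop :=
  forall x, suppX P x -> forall t, pPO_T P t false x <= pPO_T P t true x.

Inductive design := Design1 | Design2.

Definition DesignRel (mu : {measure set X -> \bar R}) (D : design)
    (P : Population) (O : Observed) : Prop :=
  match D with
  | Design1 =>
      (forall y x, obs_f O y x = fX_Y mu P y x) /\
      (forall t y x, suppX P x -> obs_Pi O t y x = pT_YX P t y x)
  | Design2 =>
      [/\ (forall x, obs_f O false x = pop_g P x),
          (forall t x, suppX P x -> obs_Pi O t false x = pT_X P t x),
          (forall x, obs_f O true x = fX_Y mu P true x)
        & (forall t x, suppX P x -> obs_Pi O t true x = pT_YX P t true x)]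
  end.

Definition PiNonzero (O : Observed) (S : set X) : Prop :=
  forall t y x, S x -> obs_Pi O t y x != 0.

Definition Admissible (mu : {measure set X -> \bar R}) (D : design)
    (O : Observed) (P : Population) : Prop :=
  IsPopulation mu P /\ CommonSupport P O /\ Overlap P /\ MTR P /\ MTS P /\
  DesignRel mu D P O.

End Model.

(* Main.v *)
Require Import Defs.
From HB Require Import structures.
From mathcomp Require Import all_boot all_order all_algebra.
From mathcomp Require Import all_classical all_reals all_analysis.
From mathcomp Require Import measurable_realfun.
From mathcomp Require Import ring lra.
Import Order.TTheory GRing.Theory Num.Theory numFieldNormedType.Exports.
Local Open Scope classical_set_scope.
Local Open Scope ring_scope.

Lemma measurable_inv (R : realType) : measurable_fun setT (@GRing.inv R).
Proof.
have -> : [set: R] = [set x | x != 0] `|` [set 0].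
  by apply/seteqP; split => x //= _; case: (eqVneq x 0); [right|left].
have o : open [set x : R | x != 0] by exact: open_neq.
apply/measurable_funU.
- exact: open_measurable.
- exact: measurable_set1.
split.
  apply: open_continuous_measurable_fun => // x; rewrite inE => x0.
  exact: inv_continuous.
move=> _ B mB /=.
case: (pselect (B (0:R)^-1)) => B0.
  rewrite (_ : _ `&` _ = [set 0]); first exact: measurable_set1.
  by apply/seteqP; split => [x [] //|x /= ->].
rewrite (_ : _ `&` _ = set0) //.
by apply/seteqP; split => [x [] /= -> //|x].
Qed.

Section Gen.
Context {d : measure_display} {X : measurableType d} {R : realType}.
Notation Pop := (@Population d X R).
Implicit Types (f g : X -> R).

Lemma mM f g : measurable_fun setT f -> measurable_fun setT g ->
  measurable_fun setT (fun x => f x * g x).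
Proof. exact: measurable_funM. Qed.
Lemma mD f g : measurable_fun setT f -> measurable_fun setT g ->
  measurable_fun setT (fun x => f x + g x).
Proof. exact: measurable_funD. Qed.
Lemma mB f g : measurable_fun setT f -> measurable_fun setT g ->
  measurable_fun setT (fun x => f x - g x).
Proof. exact: measurable_funB. Qed.
Lemma mV f : measurable_fun setT f -> measurable_fun setT (fun x => (f x)^-1).
Proof. move=> mf; exact: (measurableT_comp (@measurable_inv R) mf). Qed.
Lemma mMin f g : measurable_fun setT f -> measurable_fun setT g ->
  measurable_fun setT (fun x => Num.min (f x) (g x)).
Proof. exact: measurable_minr. Qed.
Lemma mMax f g : measurable_fun setT f -> measurable_fun setT g ->
  measurable_fun setT (fun x => Num.max (f x) (g x)).
Proof. exact: measurable_maxr. Qed.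
Lemma mC (c : R) : measurable_fun setT (fun _ : X => c).
Proof. exact: measurable_cst. Qed.

Variable Q : Pop.
Variable x : X.
Local Notation q := (pop_q Q x).

Lemma pYT_TT : pYT_X Q x true true = q true true true + q true false true.
Proof. rewrite /pYT_X !big_bool /=; ring. Qed.
Lemma pYT_FT : pYT_X Q x false true = q false true true + q false false true.
Proof. rewrite /pYT_X !big_bool /=; ring. Qed.
Lemma pYT_TF : pYT_X Q x true false = q true true false + q false true false.
Proof. rewrite /pYT_X !big_bool /=; ring. Qed.
Lemma pYT_FF : pYT_X Q x false false = q true false false + q false false false.
Proof. rewrite /pYT_X !big_bool /=; ring. Qed.
Lemma pT_XE s : pT_X Q s x = pYT_X Q x true s + pYT_X Q x false s.
Proof. by rewrite /pT_X big_bool. Qed.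
Lemma pY_XE y : pY_X Q x y = pYT_X Q x y true + pYT_X Q x y false.
Proof. by rewrite /pY_X big_bool. Qed.
Lemma pPO_T1 : pPO Q true x =
  q true true true + q true true false + q true false true + q true false false.
Proof. rewrite /pPO !big_bool /=; ring. Qed.
Lemma pPO_F1 : pPO Q false x =
  q true true true + q true true false + q false true true + q false true false.
Proof. rewrite /pPO !big_bool /=; ring. Qed.
Lemma pPO_TT s : pPO_T Q true s x = (q true true s + q true false s) / pT_X Q s x.
Proof. rewrite /pPO_T !big_bool /=; congr (_ / _); ring. Qed.
Lemma pPO_TF s : pPO_T Q false s x = (q true true s + q false true s) / pT_X Q s x.
Proof. rewrite /pPO_T !big_bool /=; congr (_ / _); ring. Qed.
Lemma sumqE : \sum_(y1 : bool) \sum_(y0 : bool) \sum_(t : bool) q y1 y0 t =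
  q true true true + q true true false + q true false true + q true false false +
  q false true true + q false true false + q false false true + q false false false.
Proof. rewrite !big_bool /=; ring. Qed.


End Gen.

Section Mk.
Context {d : measure_display} {X : measurableType d} {R : realType}.
Notation Pop := (@Population d X R).

Definition qA (p : bool -> bool -> R) (hi : bool) : R :=
  if hi then Num.min (p true true)
     (p true false * (p false true + p true true) / (p false false + p true false))
  else p true true.
Definition qB (p : bool -> bool -> R) (hi : bool) : R :=
  if hi then Num.min (p false false) (Num.max 0
     ((p false false + p true false) * p true true / (p false true + p true true)
       - p true false))
  else 0.

Definition qdef (p : bool -> bool -> R) (hi : bool) (y1 y0 t : bool) : R :=
  match y1, y0, t with
  | true, true, true => qA p hi
  | true, false, true => p true true - qA p hi
  | false, false, true => p false true
  | false, true, _ => 0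
  | true, true, false => p true false
  | true, false, false => qB p hi
  | false, false, false => p false false - qB p hi
  end.

Definition mkP (g : X -> R) (f : bool -> bool -> X -> R) (hi : bool) : Pop :=
  MkPopulation g (fun x y1 y0 t => qdef (fun y t => f y t x) hi y1 y0 t).

Variables (g : X -> R) (f : bool -> bool -> X -> R) (hi : bool).
Local Notation P' := (mkP g f hi).

Lemma mkP_pYT x y t : pYT_X P' x y t = f y t x.
Proof.
case: y; case: t;
  rewrite ?pYT_TT ?pYT_FT ?pYT_TF ?pYT_FF /= /qdef /=; ring.
Qed.

Lemma qA_ge0 (p : bool -> bool -> R) : (forall y t, 0 <= p y t) ->
  0 <= qA p hi <= p true true.
Proof.
move=> p0; rewrite /qA; case: hi; last by rewrite p0 lexx.
rewrite ge_min lexx /= le_min p0 /= andbT.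
by rewrite !mulr_ge0 ?invr_ge0 ?addr_ge0.
Qed.

Lemma qB_ge0 (p : bool -> bool -> R) : (forall y t, 0 <= p y t) ->
  0 <= qB p hi <= p false false.
Proof.
move=> p0; rewrite /qB; case: hi; last by rewrite lexx p0.
rewrite ge_min lexx /= le_min p0 /= andbT.
by rewrite le_max lexx.
Qed.

Lemma qdef_ge0 (p : bool -> bool -> R) y1 y0 t : (forall y t, 0 <= p y t) ->
  0 <= qdef p hi y1 y0 t.
Proof.
move=> p0; have /andP[A0 A1] := qA_ge0 p p0; have /andP[B0 B1] := qB_ge0 p p0.
by case: y1; case: y0; case: t; rewrite /qdef ?subr_ge0.
Qed.

Lemma mkP_meas y1 y0 t : (forall y t, measurable_fun setT (f y t)) ->
  measurable_fun setT (fun x => pop_q P' x y1 y0 t).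
Proof.
move=> mf /=.
have mqA : measurable_fun setT (fun x => qA (fun y t => f y t x) hi).
  rewrite /qA; case: hi.
    apply: mMin => //; apply: mM; first apply: mM => //; first exact: mD.
    by apply: mV; exact: mD.
  exact: mf.
have mqB : measurable_fun setT (fun x => qB (fun y t => f y t x) hi).
  rewrite /qB; case: hi; last exact: mC.
  apply: mMin => //; apply: mMax; first exact: mC.
  apply: mB => //; apply: mM; first apply: mM => //; first exact: mD.
  by apply: mV; exact: mD.
case: y1; case: y0; case: t; rewrite /qdef => //; try exact: mC;
  exact: mB.
Qed.


Lemma le_div (a b c e : R) : 0 < b -> 0 < e -> a * e <= c * b -> a / b <= c / e.
Proof.
move=> b0 e0 h; rewrite ler_pdivrMr // mulrAC ler_pdivlMr //.
Qed.

Lemma divle (a b c : R) : 0 < b -> a <= c * b -> a / b <= c.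
Proof. by move=> b0; rewrite ler_pdivrMr. Qed.
Lemma ledivr (a b c : R) : 0 < b -> c * b <= a -> c <= a / b.
Proof. by move=> b0; rewrite ler_pdivlMr. Qed.
Lemma divlt (a b c : R) : 0 < b -> a < c * b -> a / b < c.
Proof. by move=> b0; rewrite ltr_pdivrMr. Qed.
Lemma ltdivr (a b c : R) : 0 < b -> c * b < a -> c < a / b.
Proof. by move=> b0; rewrite ltr_pdivlMr. Qed.

Lemma mkP_pop (mu : {measure set X -> \bar R}) :
  measurable_fun setT g -> (forall x, 0 <= g x) -> (\int[mu]_x (g x)%:E = 1)%E ->
  (forall y t x, 0 <= f y t x) ->
  (forall x, f true true x + f true false x + f false true x + f false false x = 1) ->
  (forall y t, measurable_fun setT (f y t)) ->
  IsPopulation mu P'.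
Proof.
move=> mg g0 ig f0 fs mf; split => //; split => //; split => //; split.
  by move=> x y1 y0 t; apply: qdef_ge0 => y s; exact: f0.
split; last by move=> y1 y0 t; exact: mkP_meas.
move=> x; rewrite sumqE /= /qdef -(fs x); ring.
Qed.

Section AtX.
Variable x : X.
Local Notation p11 := (f true true x).
Local Notation p10 := (f true false x).
Local Notation p01 := (f false true x).
Local Notation p00 := (f false false x).
Hypothesis Hpos : forall y t, 0 < f y t x.
Hypothesis Hsum : p11 + p10 + p01 + p00 = 1.
Hypothesis HOR : p10 * p01 <= p11 * p00.

Lemma p11g : 0 < p11. Proof. exact: Hpos. Qed.
Lemma p10g : 0 < p10. Proof. exact: Hpos. Qed.
Lemma p01g : 0 < p01. Proof. exact: Hpos. Qed.
Lemma p00g : 0 < p00. Proof. exact: Hpos. Qed.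
Lemma P1g : 0 < p01 + p11. Proof. by rewrite addr_gt0. Qed.
Lemma P0g : 0 < p00 + p10. Proof. by rewrite addr_gt0. Qed.

Ltac pos := have ? := p11g; have ? := p10g; have ? := p01g; have ? := p00g;
  have ? := P1g; have ? := P0g; have ? := HOR; have ? := Hsum.

Lemma qA_hi : qA (fun y t => f y t x) true = p10 * (p01 + p11) / (p00 + p10).
Proof.
pos; rewrite /qA; apply/min_idPr; apply: divle => //; nra.
Qed.

Lemma qB_hi : qB (fun y t => f y t x) true =
  (p00 + p10) * p11 / (p01 + p11) - p10.
Proof.
pos; rewrite /qB (_ : Num.max _ _ = (p00 + p10) * p11 / (p01 + p11) - p10).
  apply/min_idPr; rewrite lerBlDr; apply: divle => //; nra.
apply/max_idPr; rewrite subr_ge0; apply: ledivr => //; nra.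
Qed.

Lemma mkP_pPO1 : pPO P' true x = p10 + p11 + qB (fun y t => f y t x) hi.
Proof. rewrite pPO_T1 /= /qdef; ring. Qed.
Lemma mkP_pPO0 : pPO P' false x = qA (fun y t => f y t x) hi + p10.
Proof. rewrite pPO_F1 /= /qdef; ring. Qed.

Lemma mkP_overlap : (forall t, 0 < pPO P' t x < 1) /\ 0 < pT_X P' true x < 1.
Proof.
pos; rewrite pT_XE !mkP_pYT; split; last by apply/andP; split; lra.
case; [rewrite mkP_pPO1|rewrite mkP_pPO0]; case: hi; rewrite ?qA_hi ?qB_hi /qA /qB.
- rewrite (_ : p10 + p11 + ((p00 + p10) * p11 / (p01 + p11) - p10) = p11 / (p01 + p11)).
    by rewrite divr_gt0 //=; apply: divlt => //; lra.
  rewrite (_ : p00 + p10 = 1 - (p01 + p11)); last by lra.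
  by field; rewrite lt0r_neq0.
- by apply/andP; split; lra.
- rewrite (_ : p10 * (p01 + p11) / (p00 + p10) + p10 = p10 / (p00 + p10)).
    by rewrite divr_gt0 //=; apply: divlt => //; lra.
  rewrite (_ : p01 + p11 = 1 - (p00 + p10)); last by lra.
  by field; rewrite lt0r_neq0.
- by apply/andP; split; lra.
Qed.

Lemma mkP_MTS t : pPO_T P' t false x <= pPO_T P' t true x.
Proof.
pos.
case: t; rewrite ?pPO_TT ?pPO_TF /= /qdef !pT_XE !mkP_pYT; case: hi;
  rewrite ?qA_hi ?qB_hi /qA /qB.
- rewrite le_eqVlt; apply/orP; left; apply/eqP; field; rewrite ?lt0r_neq0 //; lra.
- by rewrite addr0; apply: le_div; lra.
- rewrite le_eqVlt; apply/orP; left; apply/eqP; field; rewrite ?lt0r_neq0 //; lra.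
- by rewrite !addr0; apply: le_div; lra.
Qed.

Lemma mkP_theta_lo : hi = false -> theta P' x = 1.
Proof.
pos; move=> H; rewrite /theta mkP_pPO1 mkP_pPO0 H /qA /qB addr0 addrC divff //.
by rewrite lt0r_neq0 // addr_gt0.
Qed.

Lemma mkP_theta_hi : hi = true ->
  theta P' x = (p11 / (p01 + p11)) / (p10 / (p00 + p10)).
Proof.
pos; move=> H; rewrite /theta mkP_pPO1 mkP_pPO0 H qA_hi qB_hi.
rewrite (_ : p00 + p10 = 1 - (p01 + p11)); last by lra.
by field; rewrite ?lt0r_neq0 //; lra.
Qed.

End AtX.
End Mk.

Section Adm.
Context {d : measure_display} {X : measurableType d} {R : realType}.
Notation Pop := (@Population d X R).

Lemma mkP_adm (mu : {measure set X -> \bar R}) (D : design) (O : @Observed d X R)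
  (P : Pop) (g : X -> R) (f : bool -> bool -> X -> R) (hi : bool) :
  Admissible mu D O P ->
  measurable_fun setT g -> (forall x, 0 <= g x) -> (\int[mu]_x (g x)%:E = 1)%E ->
  (forall y t x, 0 <= f y t x) ->
  (forall x, f true true x + f true false x + f false true x + f false false x = 1) ->
  (forall y t, measurable_fun setT (f y t)) ->
  (forall x, (0 < g x) = (0 < pop_g P x)) ->
  (forall x, suppX P x -> (forall y t, 0 < f y t x) /\
     f true false x * f false true x <= f true true x * f false false x) ->
  DesignRel mu D (mkP g f hi) O ->
  Admissible mu D O (mkP g f hi).
Proof.
move=> [_ [[CS0 CS1] _]] mg g0 ig f0 fs fm G3 G4 DR.
have Su : suppX (mkP g f hi) = suppX P.
  by apply/seteqP; split => x; rewrite /suppX /= G3.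
split; first exact: mkP_pop.
split; first by rewrite /CommonSupport Su.
split.
  move=> x; rewrite Su => /G4 [Hp HO].
  apply: mkP_overlap => //; have := fs x; lra.
split; first by move=> x _; rewrite /= /qdef addr0.
split => //.
move=> x; rewrite Su => /G4 [Hp HO] t.
apply: mkP_MTS => //; have := fs x; lra.
Qed.

Lemma fine_pos (e : \bar R) : (0 <= e)%E -> fine e != 0 -> e = (fine e)%:E.
Proof. by case: e => //= _; rewrite eqxx. Qed.

Lemma mE (h : X -> R) : measurable_fun setT h ->
  measurable_fun setT (fun x => (h x)%:E).
Proof. by move=> mh; apply/measurable_EFinP. Qed.

Lemma int_scale (mu : {measure set X -> \bar R}) (h : X -> R) (k : R) :
  measurable_fun setT h -> (forall x, 0 <= h x) -> 0 <= k ->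
  (\int[mu]_x ((k * h x)%:E) = k%:E * \int[mu]_x (h x)%:E)%E.
Proof.
move=> mh h0 k0.
under eq_integral => x _ do rewrite EFinM.
apply: ge0_integralZl_EFin => //; last exact: mE.
by move=> x _; rewrite lee_fin.
Qed.

Lemma int_lin (mu : {measure set X -> \bar R}) (h1 h2 : X -> R) (k1 k2 : R) :
  measurable_fun setT h1 -> measurable_fun setT h2 ->
  (forall x, 0 <= h1 x) -> (forall x, 0 <= h2 x) -> 0 <= k1 -> 0 <= k2 ->
  (\int[mu]_x ((k1 * h1 x + k2 * h2 x)%:E) =
   k1%:E * \int[mu]_x (h1 x)%:E + k2%:E * \int[mu]_x (h2 x)%:E)%E.
Proof.
move=> m1 m2 h10 h20 k10 k20.
under eq_integral => x _ do rewrite EFinD.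
rewrite ge0_integralD //.
- by rewrite !int_scale.
- by move=> x _; rewrite lee_fin mulr_ge0.
- by apply: mE; apply: mM => //; exact: mC.
- by move=> x _; rewrite lee_fin mulr_ge0.
- by apply: mE; apply: mM => //; exact: mC.
Qed.

End Adm.

Section Orig.
Context {d : measure_display} {X : measurableType d} {R : realType}.
Notation Pop := (@Population d X R).
Variables (mu : {measure set X -> \bar R}) (Dz : design) (P : Pop) (O : @Observed d X R).
Hypothesis HA : Admissible mu Dz O P.
Hypothesis HPi : PiNonzero O (suppX P).

Local Notation pp y t x := (pYT_X P x y t).
Local Notation q x := (pop_q P x).

Lemma q_ge0 x y1 y0 t : 0 <= q x y1 y0 t.
Proof. by case: HA => [[_ [_ [_ [q0 _]]]] _]. Qed.

Lemma pp_ge0 y t x : 0 <= pp y t x.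
Proof.
by case: y; case: t; rewrite ?pYT_TT ?pYT_FT ?pYT_TF ?pYT_FF addr_ge0 ?q_ge0.
Qed.

Lemma pp_sum x : pp true true x + pp true false x + pp false true x + pp false false x = 1.
Proof.
case: HA => [[_ [_ [_ [_ [qs _]]]]] _]; have := qs x.
rewrite sumqE pYT_TT pYT_FT pYT_TF pYT_FF => h; lra.
Qed.

Lemma pp_meas y t : measurable_fun setT (fun x => pp y t x).
Proof.
case: HA => [[_ [_ [_ [_ [_ qm]]]]] _].
case: y; case: t.
- rewrite (_ : (fun x => _) = (fun x => q x true true true + q x true false true)).
    exact: mD.
  by apply/funext => x; rewrite pYT_TT.
- rewrite (_ : (fun x => _) = (fun x => q x true true false + q x false true false)).
    exact: mD.
  by apply/funext => x; rewrite pYT_TF.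
- rewrite (_ : (fun x => _) = (fun x => q x false true true + q x false false true)).
    exact: mD.
  by apply/funext => x; rewrite pYT_FT.
- rewrite (_ : (fun x => _) = (fun x => q x true false false + q x false false false)).
    exact: mD.
  by apply/funext => x; rewrite pYT_FF.
Qed.

Lemma g_meas : measurable_fun setT (pop_g P).
Proof. by case: HA => [[]]. Qed.
Lemma g_ge0 x : 0 <= pop_g P x.
Proof. by case: HA => [[_ []]]. Qed.
Lemma g_int : (\int[mu]_x (pop_g P x)%:E = 1)%E.
Proof. by case: HA => [[_ [_ []]]]. Qed.

Lemma div_le_inv (a b c e : R) : 0 < b -> 0 < e -> a / b <= c / e -> a * e <= c * b.
Proof. by move=> b0 e0; rewrite ler_pdivrMr // mulrAC ler_pdivlMr. Qed.

Lemma pos_of_Pi t y x : obs_Pi O t y x = pT_YX P t y x -> obs_Pi O t y x != 0 ->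
  0 < pp y t x.
Proof.
move=> -> h; rewrite lt0r pp_ge0 andbT; apply: contra h => /eqP.
by rewrite /pT_YX => ->; rewrite mul0r.
Qed.

Lemma pp_pos1 x t : suppX P x -> 0 < pp true t x.
Proof.
move=> hx; have h := HPi t true x hx.
case: HA => [_ [_ [_ [_ [_ DR]]]]]; move: DR; case: Dz => /=.
  by move=> [_ DR]; apply: pos_of_Pi => //; exact: DR.
by move=> [_ _ _ DR]; apply: pos_of_Pi => //; exact: DR.
Qed.

Lemma pp_pos0 x t : Dz = Design1 -> suppX P x -> 0 < pp false t x.
Proof.
move=> eD hx; have h := HPi t false x hx.
case: HA => [_ [_ [_ [_ [_ DR]]]]]; move: DR; rewrite eD => /= [[_ DR]].
by apply: pos_of_Pi => //; exact: DR.
Qed.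

Section AtX.
Variable x : X.
Hypothesis hx : suppX P x.

Lemma orig_facts :
  [/\ q x false true true = 0, q x false true false = 0,
   0 < pT_X P true x < 1,
   q x true true false * pT_X P true x <= q x true true true * pT_X P false x &
   (q x true true false + q x true false false) * pT_X P true x <=
      (q x true true true + q x true false true) * pT_X P false x].
Proof.
case: HA => [_ [_ [Ov [Mtr [Mts _]]]]].
have h1 := q_ge0 x false true true; have h2 := q_ge0 x false true false.
have := Mtr x hx => hm.
have [_ hT] := Ov x hx.
have hs := pp_sum x.
have e : pT_X P false x = 1 - pT_X P true x.
  by rewrite !pT_XE; lra.
have hT' := hT; move/andP: hT' => [hT0 hT1].
have hF : 0 < pT_X P false x by rewrite e subr_gt0.
have m0 := Mts x hx false; have m1 := Mts x hx true.
rewrite !pPO_TF !pPO_TT in m0 m1.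
have z1 : q x false true true = 0 by lra.
have z2 : q x false true false = 0 by lra.
rewrite z1 z2 !addr0 in m0.
split => //.
- by have := div_le_inv _ _ _ _ hF hT0 m0.
- by have := div_le_inv _ _ _ _ hF hT0 m1.
Qed.

Lemma orig_OR : pp true false x * pp false true x <= pp true true x * pp false false x.
Proof.
have [z1 z2 hT m0 m1] := orig_facts.
move: m0 m1 hT; rewrite !pT_XE pYT_TT pYT_TF pYT_FT pYT_FF z1 z2.
have := q_ge0 x true true true; have := q_ge0 x true false true;
have := q_ge0 x false false true; have := q_ge0 x true true false;
have := q_ge0 x true false false; have := q_ge0 x false false false.
move: (q x true true true) (q x true false true) (q x false false true)
  (q x true true false) (q x true false false) (q x false false false).
move=> a b c a' b' c' hc' hb' ha' hc hb ha m0 m1 hT.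
nra.
Qed.

Lemma orig_theta :
  1 <= theta P x <= (pp true true x / (pp false true x + pp true true x)) /
                    (pp true false x / (pp false false x + pp true false x)).
Proof.
have [z1 z2 hT m0 m1] := orig_facts.
have hs := pp_sum x.
have p10 := pp_pos1 x false hx.
move: m0 m1 hT hs p10; rewrite /theta pPO_T1 pPO_F1 !pT_XE pYT_TT pYT_TF pYT_FT pYT_FF z1 z2.
have := q_ge0 x true true true; have := q_ge0 x true false true;
have := q_ge0 x false false true; have := q_ge0 x true true false;
have := q_ge0 x true false false; have := q_ge0 x false false false.
move: (q x true true true) (q x true false true) (q x false false true)
  (q x true true false) (q x true false false) (q x false false false).
move=> a b c a' b' c' hc' hb' ha' hc hb ha m0 m1 /andP[hT0 hT1] hs p10.
have P0g : 0 < a' + 0 + (b' + c') by lra.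
have Dg : 0 < a + a' + 0 + 0 by lra.
apply/andP; split.
  by apply: ledivr => //; lra.
have hu : a + a' + b + b' <= (a + b) / (0 + c + (a + b)).
  by apply: ledivr => //; nra.
have hv : (a' + 0) / (b' + c' + (a' + 0)) <= a + a' + 0 + 0.
  by apply: divle; nra.
have hv0 : 0 < (a' + 0) / (b' + c' + (a' + 0)) by apply: divr_gt0; lra.
have hu0 : 0 <= (a + b) / (0 + c + (a + b)) by apply: divr_ge0; lra.
apply: le_div => //.
move: hu hv hv0 hu0.
move: ((a + b) / (0 + c + (a + b))) ((a' + 0) / (b' + c' + (a' + 0))) => u v.
nra.
Qed.

End AtX.

Lemma m_ge0 y x : 0 <= pY_X P x y.
Proof. by rewrite pY_XE addr_ge0 ?pp_ge0. Qed.

Lemma m_sum x : pY_X P x true + pY_X P x false = 1.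
Proof. have := pp_sum x; rewrite !pY_XE => h; lra. Qed.

Lemma m_meas y : measurable_fun setT (fun x => pY_X P x y).
Proof.
rewrite (_ : (fun x => _) = (fun x => pp y true x + pp y false x)).
  by apply: mD; exact: pp_meas.
by apply/funext => x; rewrite pY_XE.
Qed.

Lemma gm_meas y : measurable_fun setT (fun x => pop_g P x * pY_X P x y).
Proof. by apply: mM; [exact: g_meas|exact: m_meas]. Qed.

Lemma gm_ge0 y x : 0 <= pop_g P x * pY_X P x y.
Proof. by rewrite mulr_ge0 ?g_ge0 ?m_ge0. Qed.

Lemma pY_ge0 y : 0 <= pY mu P y.
Proof. by rewrite /pY fine_ge0 // integral_ge0 // => x _; rewrite lee_fin gm_ge0. Qed.

Lemma pY_int y : 0 < pY mu P y ->
  (\int[mu]_x (pop_g P x * pY_X P x y)%:E = (pY mu P y)%:E)%E.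
Proof.
move=> h; apply: fine_pos; last by rewrite -/(pY mu P y) lt0r_neq0.
by rewrite integral_ge0 // => x _; rewrite lee_fin gm_ge0.
Qed.

Lemma pY_pos_of y x : suppX P x -> obs_f O y x = fX_Y mu P y x -> 0 < pY mu P y.
Proof.
move=> hx e.
case: HA => [_ [[CS0 CS1] _]].
have h : 0 < obs_f O y x.
  case: y e => _.
    by have : [set x | 0 < obs_f O true x] x by rewrite -CS1.
  by have : [set x | 0 < obs_f O false x] x by rewrite -CS0.
rewrite lt0r pY_ge0 andbT; apply/negP => /eqP h0.
by move: h; rewrite e /fX_Y h0 invr0 mulr0 ltxx.
Qed.

Lemma pY_sum : 0 < pY mu P true -> 0 < pY mu P false ->
  pY mu P true + pY mu P false = 1.
Proof.
move=> h1 h0.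
have := g_int.
rewrite (eq_integral (fun x => ((1 * (pop_g P x * pY_X P x true) +
   1 * (pop_g P x * pY_X P x false))%:E))); last first.
  by move=> x _; congr EFin; rewrite !mul1r -mulrDr m_sum mulr1.
rewrite int_lin ?pY_int //; try exact: gm_meas; try exact: gm_ge0.
by rewrite !mul1e -EFinD => -[].
Qed.

Lemma fX_eq (Q : Pop) y (k : R) : 0 < k -> 0 < pY mu P y ->
  (forall x, pop_g Q x * pY_X Q x y = k * (pop_g P x * pY_X P x y)) ->
  forall x, fX_Y mu Q y x = fX_Y mu P y x.
Proof.
move=> k0 hp H x.
have eY : pY mu Q y = k * pY mu P y.
  rewrite /pY (eq_integral (fun x => ((k * (pop_g P x * pY_X P x y))%:E))); last first.
    by move=> z _; rewrite H.
  by rewrite int_scale ?pY_int //; [exact: gm_meas|exact: gm_ge0|exact: ltW].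
rewrite /fX_Y H eY; field.
by rewrite !lt0r_neq0.
Qed.


Lemma DR1 : Dz = Design1 ->
  (forall y x, obs_f O y x = fX_Y mu P y x) /\
  (forall t y x, suppX P x -> obs_Pi O t y x = pT_YX P t y x).
Proof. by case: HA => [_ [_ [_ [_ [_ DR]]]]] eD; move: DR; rewrite eD. Qed.

Section D1.
Variable k : R.
Hypothesis k0 : 0 < k.
Hypothesis eD : Dz = Design1.
Variable x0 : X.
Hypothesis hx0 : suppX P x0.

Definition N1 x := k * pY_X P x true + pY_X P x false.
Definition f1 (y t : bool) x := (if y then k else 1) * pYT_X P x y t / N1 x.
Definition Z1 := k * pY mu P true + pY mu P false.
Definition g1 x := pop_g P x * N1 x / Z1.

Lemma N1_gt0 x : 0 < N1 x.
Proof.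
have h1 := m_ge0 true x; have h0 := m_ge0 false x; have hs := m_sum x.
have kk := k0.
rewrite /N1; case: (lerP k 1) => hk; nra.
Qed.

Lemma N1_meas : measurable_fun setT N1.
Proof.
rewrite /N1; apply: mD; last exact: m_meas.
by apply: mM; [exact: mC|exact: m_meas].
Qed.

Lemma pY1_pos y : 0 < pY mu P y.
Proof. by apply: (pY_pos_of y x0 hx0); exact: (DR1 eD).1. Qed.

Lemma Z1_gt0 : 0 < Z1.
Proof. by rewrite /Z1 addr_gt0 ?mulr_gt0 ?pY1_pos. Qed.

Lemma pYX1 hi x y : pY_X (mkP g1 f1 hi) x y = (if y then k else 1) * pY_X P x y / N1 x.
Proof.
rewrite pY_XE !mkP_pYT /f1 pY_XE; have := N1_gt0 x => hN.
by field; rewrite lt0r_neq0.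
Qed.

Lemma g1_pos x : (0 < g1 x) = (0 < pop_g P x).
Proof. by rewrite /g1 -mulrA pmulr_lgt0 // divr_gt0 ?N1_gt0 ?Z1_gt0. Qed.

Lemma adm1 hi : Admissible mu Dz O (mkP g1 f1 hi).
Proof.
have hZ := Z1_gt0; have hY1 := pY1_pos true; have hY0 := pY1_pos false.
have kk := k0.
apply: mkP_adm; first exact: HA.
- rewrite /g1; apply: mM; last exact: mC.
  by apply: mM; [exact: g_meas|exact: N1_meas].
- by move=> x; rewrite /g1 divr_ge0 ?mulr_ge0 ?g_ge0 ?(ltW (N1_gt0 x)) ?(ltW hZ).
- rewrite (eq_integral (fun x => ((k / Z1 * (pop_g P x * pY_X P x true) +
     1 / Z1 * (pop_g P x * pY_X P x false))%:E))); last first.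
    move=> x _; congr EFin; rewrite /g1 /N1; field; exact: lt0r_neq0.
  rewrite int_lin ?pY_int //; try exact: gm_meas; try exact: gm_ge0; last first.
    by rewrite divr_ge0 // ltW.
    by rewrite divr_ge0 // ltW.
  rewrite -!EFinM -EFinD; congr EFin; rewrite /Z1; field.
  by rewrite -/Z1 lt0r_neq0.
- move=> y t x; rewrite /f1 divr_ge0 ?(ltW (N1_gt0 x)) // mulr_ge0 ?pp_ge0 //.
  by case: y => //; exact: ltW.
- move=> x; rewrite /f1; have hN := N1_gt0 x; have hs := pp_sum x.
  apply: (@mulIf _ (N1 x)); first exact: lt0r_neq0.
  rewrite !mulrDl !divfK ?lt0r_neq0 // mul1r /N1 !pY_XE; lra.
- move=> y t; rewrite /f1; apply: mM; last by apply: mV; exact: N1_meas.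
  by apply: mM; [exact: mC|exact: pp_meas].
- exact: g1_pos.
- move=> x hx; have hN := N1_gt0 x.
  have OR := orig_OR x hx.
  split.
    move=> y t; rewrite /f1 divr_gt0 // mulr_gt0 //; last first.
      by case: y; [exact: (pp_pos1 _ _ hx)|exact: (pp_pos0 _ _ eD hx)].
    by case: y.
  rewrite /f1 /=.
  rewrite (_ : k * pp true false x / N1 x * (1 * pp false true x / N1 x) =
     (k / (N1 x * N1 x)) * (pp true false x * pp false true x)); last first.
    by field; rewrite lt0r_neq0.
  rewrite (_ : k * pp true true x / N1 x * (1 * pp false false x / N1 x) =
     (k / (N1 x * N1 x)) * (pp true true x * pp false false x)); last first.
    by field; rewrite lt0r_neq0.
  by rewrite ler_wpM2l // divr_ge0 ?mulr_ge0 // ltW.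
- rewrite eD /=; have [Ef EPi] := DR1 eD; split.
    move=> y x; rewrite Ef; apply/esym; apply: (@fX_eq _ y ((if y then k else 1) / Z1)).
    + by rewrite divr_gt0 //; case: y.
    + exact: pY1_pos.
    + move=> z; rewrite /= pYX1 /g1; have := N1_gt0 z => hN.
      by field; rewrite !lt0r_neq0.
  move=> t y x; rewrite /suppX /= g1_pos -/(suppX P x) => hx.
  rewrite EPi // /pT_YX mkP_pYT pYX1 /f1.
  have hN := N1_gt0 x.
  have hm : 0 < pY_X P x y.
    rewrite pY_XE; case: y.
      by rewrite addr_gt0 // (pp_pos1 _ _ hx).
    by rewrite addr_gt0 // (pp_pos0 _ _ eD hx).
  by case: y hm => hm; field; rewrite !lt0r_neq0.
Qed.

Lemma theta1_hi x : suppX P x ->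
  theta (mkP g1 f1 true) x =
  (pp true true x / (pp false true x + k * pp true true x)) /
  (pp true false x / (pp false false x + k * pp true false x)).
Proof.
move=> hx; have hN := N1_gt0 x.
have h11 := pp_pos1 _ true hx; have h10 := pp_pos1 _ false hx.
have h01 := pp_pos0 _ true eD hx; have h00 := pp_pos0 _ false eD hx.
rewrite mkP_theta_hi //.
- rewrite /f1 /=; field.
  by repeat (apply/andP; split); apply: lt0r_neq0 => //; rewrite addr_gt0 // mulr_gt0.
- move=> y t; rewrite /f1 divr_gt0 // mulr_gt0 //; last first.
    by case: y; [exact: (pp_pos1 _ _ hx)|exact: (pp_pos0 _ _ eD hx)].
  by case: y.
- have hs := pp_sum x.
  rewrite /f1 /= -!mulrDl; apply: (@mulIf _ (N1 x)); first exact: lt0r_neq0.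
  rewrite !mulrDl !divfK ?lt0r_neq0 // /N1 !pY_XE; lra.
- have OR := orig_OR x hx.
  rewrite /f1 /=.
  rewrite (_ : k * pp true false x / N1 x * (1 * pp false true x / N1 x) =
     (k / (N1 x * N1 x)) * (pp true false x * pp false true x)); last first.
    by field; rewrite lt0r_neq0.
  rewrite (_ : k * pp true true x / N1 x * (1 * pp false false x / N1 x) =
     (k / (N1 x * N1 x)) * (pp true true x * pp false false x)); last first.
    by field; rewrite lt0r_neq0.
  by rewrite ler_wpM2l // divr_ge0 ?mulr_ge0 // ltW.
Qed.

Lemma theta1_lo x : suppX P x -> theta (mkP g1 f1 false) x = 1.
Proof.
move=> hx; have hN := N1_gt0 x.
apply: mkP_theta_lo => //.
- move=> y t; rewrite /f1 divr_gt0 // mulr_gt0 //; last first.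
    by case: y; [exact: (pp_pos1 _ _ hx)|exact: (pp_pos0 _ _ eD hx)].
  by case: y.
- have hs := pp_sum x.
  rewrite /f1 /= -!mulrDl; apply: (@mulIf _ (N1 x)); first exact: lt0r_neq0.
  rewrite !mulrDl !divfK ?lt0r_neq0 // /N1 !pY_XE; lra.
- have OR := orig_OR x hx.
  rewrite /f1 /=.
  rewrite (_ : k * pp true false x / N1 x * (1 * pp false true x / N1 x) =
     (k / (N1 x * N1 x)) * (pp true false x * pp false true x)); last first.
    by field; rewrite lt0r_neq0.
  rewrite (_ : k * pp true true x / N1 x * (1 * pp false false x / N1 x) =
     (k / (N1 x * N1 x)) * (pp true true x * pp false false x)); last first.
    by field; rewrite lt0r_neq0.
  by rewrite ler_wpM2l // divr_ge0 ?mulr_ge0 // ltW.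
Qed.

End D1.


Section D2.
Hypothesis eD : Dz = Design2.
Variable x0 : X.
Hypothesis hx0 : suppX P x0.

Definition f2 (y t : bool) x :=
  if y then pp true t x / 2 else pp false t x + pp true t x / 2.

Lemma DR2 :
  [/\ (forall x, obs_f O false x = pop_g P x),
      (forall t x, suppX P x -> obs_Pi O t false x = pT_X P t x),
      (forall x, obs_f O true x = fX_Y mu P true x)
    & (forall t x, suppX P x -> obs_Pi O t true x = pT_YX P t true x)].
Proof. by case: HA => [_ [_ [_ [_ [_ DR]]]]]; move: DR; rewrite eD. Qed.

Lemma f2_sum x : f2 true true x + f2 true false x + f2 false true x + f2 false false x = 1.
Proof. have := pp_sum x; rewrite /f2 => h; lra. Qed.

Lemma f2_pos x : suppX P x -> forall y t, 0 < f2 y t x.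
Proof.
move=> hx y t; have h1 := pp_pos1 x t hx; have h0 := pp_ge0 false t x.
rewrite /f2; case: y; lra.
Qed.

Lemma f2_OR x : suppX P x ->
  f2 true false x * f2 false true x <= f2 true true x * f2 false false x.
Proof.
move=> hx; have OR := orig_OR x hx; rewrite /f2 /=; nra.
Qed.

Lemma adm2 hi : Admissible mu Dz O (mkP (pop_g P) f2 hi).
Proof.
have [Ef0 EPi0 Ef1 EPi1] := DR2.
have hY1 : 0 < pY mu P true by apply: (pY_pos_of true x0 hx0); exact: Ef1.
apply: mkP_adm; first exact: HA.
- exact: g_meas.
- exact: g_ge0.
- exact: g_int.
- move=> y t x; have h1 := pp_ge0 true t x; have h0 := pp_ge0 false t x.
  rewrite /f2; case: y; lra.
- exact: f2_sum.
- move=> y t; rewrite /f2; case: y.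
    by apply: mM; [exact: pp_meas|exact: mC].
  by apply: mD; [exact: pp_meas|apply: mM; [exact: pp_meas|exact: mC]].
- by [].
- by move=> x hx; split; [exact: f2_pos|exact: f2_OR].
- rewrite eD /=; split.
  + by move=> x; rewrite Ef0.
  + by move=> t x hx; rewrite EPi0 // !pT_XE !mkP_pYT /f2; field.
  + move=> x; rewrite Ef1; apply/esym; apply: (@fX_eq _ true (1 / 2)).
    * by rewrite divr_gt0.
    * exact: hY1.
    by move=> z; rewrite /= pY_XE !mkP_pYT pY_XE /f2; field.
  + move=> t x hx; rewrite EPi1 // /pT_YX !pY_XE !mkP_pYT /f2.
    have := pp_pos1 x true hx; have := pp_pos1 x false hx => h1 h2.
    by field; rewrite lt0r_neq0 // addr_gt0.
Qed.

Lemma theta2_hi x : suppX P x ->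
  theta (mkP (pop_g P) f2 true) x =
  (pp true true x / (pp false true x + pp true true x)) /
  (pp true false x / (pp false false x + pp true false x)).
Proof.
move=> hx.
have h11 := pp_pos1 x true hx; have h10 := pp_pos1 x false hx.
have h01 := pp_ge0 false true x; have h00 := pp_ge0 false false x.
rewrite mkP_theta_hi //; last 3 first.
- exact: f2_pos.
- exact: f2_sum.
- exact: f2_OR.
rewrite /f2 /=.
have e1 : 0 < pp false true x + pp true true x by lra.
have e0 : 0 < pp false false x + pp true false x by lra.
rewrite (_ : pp false true x + pp true true x / 2 + pp true true x / 2 =
  pp false true x + pp true true x); last by field.
rewrite (_ : pp false false x + pp true false x / 2 + pp true false x / 2 =
  pp false false x + pp true false x); last by field.
field.
by repeat (apply/andP; split); apply: lt0r_neq0.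
Qed.

Lemma theta2_lo x : suppX P x -> theta (mkP (pop_g P) f2 false) x = 1.
Proof.
move=> hx; apply: mkP_theta_lo => //.
- exact: f2_pos.
- exact: f2_sum.
- exact: f2_OR.
Qed.

End D2.


Lemma Gamma1 x : Dz = Design1 -> suppX P x ->
  Gamma O x = pp true true x * pp false false x / (pp true false x * pp false true x).
Proof.
move=> eD hx; have [_ EPi] := DR1 eD.
have h11 := pp_pos1 x true hx; have h10 := pp_pos1 x false hx.
have h01 := pp_pos0 x true eD hx; have h00 := pp_pos0 x false eD hx.
rewrite /Gamma !EPi // /pT_YX !pY_XE; field.
by repeat (apply/andP; split); apply: lt0r_neq0 => //; rewrite addr_gt0.
Qed.

Lemma Gamma2 x : Dz = Design2 -> suppX P x ->
  Gamma O x = (pp true true x / (pp false true x + pp true true x)) /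
    (pp true false x / (pp false false x + pp true false x)).
Proof.
move=> eD hx; have [_ EPi0 _ EPi1] := DR2 eD.
have h11 := pp_pos1 x true hx; have h10 := pp_pos1 x false hx.
have h01 := pp_ge0 false true x; have h00 := pp_ge0 false false x.
have e1 : 0 < pp false true x + pp true true x by lra.
have e0 : 0 < pp false false x + pp true false x by lra.
have e2 : 0 < pp true true x + pp true false x by lra.
rewrite /Gamma EPi1 // EPi1 // EPi0 // EPi0 // /pT_YX !pY_XE !pT_XE.
rewrite [pp true true x + pp false true x]addrC [pp true false x + pp false false x]addrC.
field.
by repeat (apply/andP; split); apply: lt0r_neq0.
Qed.

End Orig.

Lemma div_lt_inv {R : realType} (a b c : R) : 0 < b -> c < a / b -> c * b < a.
Proof. by move=> b0; rewrite ltr_pdivlMr. Qed.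

Theorem theorem3 (d : measure_display) (X : measurableType d) (R : realType)
    (mu : {measure set X -> \bar R}) (D : design)
    (P : @Population d X R) (O : @Observed d X R) :
  Admissible mu D O P -> PiNonzero O (suppX P) ->
  forall x : X, suppX P x ->
    [/\ 1 <= theta P x <= Gamma O x,
        (forall c : R, 1 < c ->
           exists P' : @Population d X R, Admissible mu D O P' /\ theta P' x < c)
      & (forall c : R, c < Gamma O x ->
           exists P' : @Population d X R, Admissible mu D O P' /\ c < theta P' x)].
Proof.
move=> HA HPi x hx.
have /andP[th1 th2] := orig_theta _ _ _ _ HA HPi x hx.
have OR := orig_OR _ _ _ _ HA x hx.
have h11 := pp_pos1 _ _ _ _ HA HPi x true hx.
have h10 := pp_pos1 _ _ _ _ HA HPi x false hx.
have h01 := pp_ge0 _ _ _ _ HA false true x.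
have h00 := pp_ge0 _ _ _ _ HA false false x.
move: th2 OR h11 h10 h01 h00.
set p11 := pYT_X P x true true; set p10 := pYT_X P x true false.
set p01 := pYT_X P x false true; set p00 := pYT_X P x false false.
move=> th2 OR h11 h10 h01 h00.
case eD : D.
-
  have h01' : 0 < p01 := pp_pos0 _ _ _ _ HA HPi x true eD hx.
  have h00' : 0 < p00 := pp_pos0 _ _ _ _ HA HPi x false eD hx.
  rewrite (Gamma1 _ _ _ _ HA HPi x eD hx) -/p11 -/p10 -/p01 -/p00.
  split.
  + rewrite th1 /=; apply: (le_trans th2).
    rewrite (_ : p11 / (p01 + p11) / (p10 / (p00 + p10)) =
       (p11 * (p00 + p10)) / (p10 * (p01 + p11))); last first.
      by field; repeat (apply/andP; split); apply: lt0r_neq0 => //; rewrite addr_gt0.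
    apply: le_div; rewrite ?mulr_gt0 ?addr_gt0 //.
    have := mulr_ge0 (ltW h11) (ltW h10); nra.
  + move=> c c1; exists (mkP (g1 mu P 1) (f1 P 1) false); split.
      by have := adm1 _ _ _ _ HA HPi 1 ltr01 eD x hx false; rewrite eD.
    by rewrite (theta1_lo _ _ _ _ HA HPi 1 ltr01 eD x hx).
  + move=> c hc.
    have hG : c * (p10 * p01) < p11 * p00 by apply: div_lt_inv => //; rewrite mulr_gt0.
    pose k := (p11 * p00 - c * (p10 * p01)) / (2 * p10 * p11 * (1 + c ^+ 2)).
    have hq : 0 < 1 + c ^+ 2 by rewrite ltr_pwDl // sqr_ge0.
    have k0 : 0 < k by rewrite /k divr_gt0 ?subr_gt0 // !mulr_gt0.
    have hK : k * (2 * p10 * p11 * (1 + c ^+ 2)) = p11 * p00 - c * (p10 * p01).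
      by rewrite /k divfK // lt0r_neq0 // !mulr_gt0.
    exists (mkP (g1 mu P k) (f1 P k) true); split.
      by have := adm1 _ _ _ _ HA HPi k k0 eD x hx true; rewrite eD.
    rewrite (theta1_hi _ _ _ _ HA HPi k k0 eD x hx) -/p11 -/p10 -/p01 -/p00.
    rewrite (_ : p11 / (p01 + k * p11) / (p10 / (p00 + k * p10)) =
       (p11 * (p00 + k * p10)) / (p10 * (p01 + k * p11))); last first.
      by field; repeat (apply/andP; split); apply: lt0r_neq0 => //;
         rewrite addr_gt0 // mulr_gt0.
    apply: ltdivr; first by rewrite mulr_gt0 // addr_gt0 // mulr_gt0.
    have hKp : 0 < k * p10 * p11 by apply: mulr_gt0 => //; apply: mulr_gt0.
    have hq2 : 0 < 2 * c ^+ 2 - c + 3 by nra.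
    have := mulr_gt0 hKp hq2.
    move: hK; rewrite expr2; nra.
-
  have hG := Gamma2 _ _ _ _ HA HPi x eD hx; rewrite -/p11 -/p10 -/p01 -/p00 in hG.
  rewrite hG.
  split.
  + by rewrite th1 th2.
  + move=> c c1; exists (mkP (pop_g P) (f2 P) false); split.
      by have := adm2 _ _ _ _ HA HPi eD x hx false; rewrite eD.
    by rewrite (theta2_lo _ _ _ _ HA HPi x hx).
  + move=> c hc; exists (mkP (pop_g P) (f2 P) true); split.
      by have := adm2 _ _ _ _ HA HPi eD x hx true; rewrite eD.
    by rewrite (theta2_hi _ _ _ _ HA HPi x hx).
Qed.
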